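(* Let $(\mathfrak{g},[\cdot,\cdot]_{\mathfrak{g}})$ be a Leibniz algebra, $(V;\rho^L,\rho^R)$ a representation, and $T:V\to\mathfrak{g}$ a relative Rota-Baxter operator. Define $\bar\rho^L,\bar\rho^R:V\to\mathfrak{gl}(\mathfrak{g})$ by $\bar\rho^L(u)x=[Tu,x]_{\mathfrak{g}}-T\rho^R(x)u$ and $\bar\rho^R(u)x=[x,Tu]_{\mathfrak{g}}-T\rho^L(x)u$ for $u\in V$, $x\in\mathfrak{g}$. Then $(\mathfrak{g};\bar\rho^L,\bar\rho^R)$ is a representation of the Leibniz algebra $(V,[\cdot,\cdot]_T)$, where $[u,v]_T=\rho^L(Tu)v+\rho^R(Tv)u$.
   Context: A Leibniz algebra is a vector space $\mathfrak{g}$ with bilinear $[\cdot,\cdot]_{\mathfrak{g}}$ satisfying $[x,[y,z]_{\mathfrak{g}}]_{\mathfrak{g}}=[[x,y]_{\mathfrak{g}},z]_{\mathfrak{g}}+[y,[x,z]_{\mathfrak{g}}]_{\mathfrak{g}}$. A representation $(W;\sigma^L,\sigma^R)$ of a Leibniz algebra $(\mathfrak{h},[\cdot,\cdot]_{\mathfrak{h}})$ is a vector space $W$ with linear maps $\sigma^L,\sigma^R:\mathfrak{h}\to\mathfrak{gl}(W)$ such that $\sigma^L([x,y]_{\mathfrak{h}})=[\sigma^L(x),\sigma^L(y)]$, $\sigma^R([x,y]_{\mathfrak{h}})=[\sigma^L(x),\sigma^R(y)]$, $\sigma^R(y)\sigma^L(x)=-\sigma^R(y)\sigma^R(x)$ for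 all $x,y\in\mathfrak{h}$ (commutators in $\mathfrak{gl}(W)$). A relative Rota-Baxter operator on $\mathfrak{g}$ with respect to a representation $(V;\rho^L,\rho^R)$ is a linear $T:V\to\mathfrak{g}$ with $[Tv_1,Tv_2]_{\mathfrak{g}}=T(\rho^L(Tv_1)v_2+\rho^R(Tv_2)v_1)$; then $(V,[\cdot,\cdot]_T)$ is a Leibniz algebra. *)

(* Defs.v *)
From HB Require Import structures.
From mathcomp Require Import all_boot all_algebra.
Set Implicit Arguments. Unset Strict Implicit. Unset Printing Implicit Defensive.
Import GRing.Theory.
Local Open Scope ring_scope.

Definition is_lin (K : fieldType) (U W : lmodType K) (f : U -> W) : Prop :=
  forall (a : K) (u v : U), f (a *: u + v) = a *: f u + f v.

Definition is_bilinear (K : fieldType) (g : lmodType K) (br : g -> g -> g) : Prop :=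
  (forall x, is_lin (br x)) /\ (forall y, is_lin (fun x => br x y)).

Definition leibniz_algebra (K : fieldType) (g : lmodType K) (br : g -> g -> g) : Prop :=
  is_bilinear br /\
  forall x y z, br x (br y z) = br (br x y) z + br y (br x z).

Definition is_lin_to_gl (K : fieldType) (h W : lmodType K) (s : h -> W -> W) : Prop :=
  (forall x, is_lin (s x)) /\ (forall w, is_lin (fun x => s x w)).

Definition is_representation (K : fieldType) (h W : lmodType K)
  (br : h -> h -> h) (sL sR : h -> W -> W) : Prop :=
  [/\ is_lin_to_gl sL, is_lin_to_gl sR,
      (forall x y w, sL (br x y) w = sL x (sL y w) - sL y (sL x w)),
      (forall x y w, sR (br x y) w = sL x (sR y w) - sR y (sL x w)) &
      (forall x y w, sR y (sL x w) = - sR y (sR x w))].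

Definition is_relative_RB (K : fieldType) (g V : lmodType K)
  (br : g -> g -> g) (rhoL rhoR : g -> V -> V) (T : V -> g) : Prop :=
  is_lin T /\
  forall v1 v2, br (T v1) (T v2) = T (rhoL (T v1) v2 + rhoR (T v2) v1).

Definition bracket_T (K : fieldType) (g V : lmodType K)
  (rhoL rhoR : g -> V -> V) (T : V -> g) : V -> V -> V :=
  fun u v => rhoL (T u) v + rhoR (T v) u.

Definition bar_rhoL (K : fieldType) (g V : lmodType K)
  (br : g -> g -> g) (rhoR : g -> V -> V) (T : V -> g) : V -> g -> g :=
  fun u x => br (T u) x - T (rhoR x u).

Definition bar_rhoR (K : fieldType) (g V : lmodType K)
  (br : g -> g -> g) (rhoL : g -> V -> V) (T : V -> g) : V -> g -> g :=
  fun u x => br x (T u) - T (rhoL x u).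

(* Main.v *)
Require Import Defs.
From mathcomp Require Import all_boot all_algebra.
Import GRing.Theory.
Local Open Scope ring_scope.

Section Aux.
Context {K : fieldType}.

Lemma linD {U W : lmodType K} {f : U -> W} : is_lin f -> forall u v, f (u + v) = f u + f v.
Proof. by move=> H u v; have := H 1 u v; rewrite !scale1r. Qed.

Lemma lin0 {U W : lmodType K} {f : U -> W} : is_lin f -> f 0 = 0.
Proof. by move=> H; apply: (@addrI _ (f 0)); rewrite -(linD H) !addr0. Qed.

Lemma linN {U W : lmodType K} {f : U -> W} : is_lin f -> forall u, f (- u) = - f u.
Proof.
move=> H u; apply/eqP; rewrite -subr_eq0 opprK addrC -(linD H) subrr (lin0 H) //.
Qed.

Lemma linB {U W : lmodType K} {f : U -> W} : is_lin f -> forall u v, f (u - v) = f u - f v.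
Proof. by move=> H u v; rewrite (linD H) (linN H). Qed.

Lemma lin_sub {U W : lmodType K} {f g : U -> W} : is_lin f -> is_lin g ->
  is_lin (fun x => f x - g x).
Proof.
move=> Hf Hg a u v; rewrite Hf Hg scalerBr !opprD !addrA.
by rewrite [RHS](ACl (1*3*2*4)%AC).
Qed.

Lemma lin_comp {U W X : lmodType K} {f : W -> X} {g : U -> W} : is_lin f -> is_lin g ->
  is_lin (fun x => f (g x)).
Proof. by move=> Hf Hg a u v; rewrite Hg Hf. Qed.
End Aux.

Lemma Z1 (M : zmodType) (X P b c b' c' : M): X - ((b + c) - (b' + c')) = (X + P - b - c) - (P - b' - c').
Proof. rewrite !opprD !opprK !addrA. by rewrite [RHS](ACl ((2*5)*(1*3*4*6*7))%AC) /= addrN add0r. Qed.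

Lemma Z1' (M : zmodType) (X P b c b' c' : M): X - ((b + c) - (b' + c')) = (P + X - b - c) - (P - b' - c').
Proof. by rewrite (addrC P); apply: Z1. Qed.

Lemma Z2 (M : zmodType) (a b c d : M) : a + b = (c + (d - - b)) - (d + (c - a)).
Proof.
rewrite !opprD !opprK !addrA.
by rewrite [RHS](ACl ((1*5)*(2*4)*(6*3))%AC) /= !addrN !add0r addrC.
Qed.

Lemma Z3 (M : zmodType) (a b c d : M) : a + b = (c + (b - - d)) - (d + (c - a)).
Proof.
rewrite !opprD !opprK !addrA.
by rewrite [RHS](ACl ((1*5)*(3*4)*(6*2))%AC) /= !addrN !add0r addrC.
Qed.

Lemma G1 (M : zmodType) (a p q r : M) : a - (p + q) - (r - q) = a - p - r.
Proof.
rewrite !opprD !opprK !addrA.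
by rewrite [LHS](ACl ((3*5)*(1*2*4))%AC) /= addNr add0r.
Qed.

Lemma G2 (M : zmodType) (a p q r : M) : a - (p + q) - (r - p) = a - q - r.
Proof. by rewrite (addrC p) G1. Qed.

Theorem theorem2p7 (K : fieldType) (g V : lmodType K)
  (br : g -> g -> g) (rhoL rhoR : g -> V -> V) (T : V -> g) :
  leibniz_algebra br ->
  is_representation br rhoL rhoR ->
  is_relative_RB br rhoL rhoR T ->
  is_representation (bracket_T rhoL rhoR T)
    (bar_rhoL br rhoR T) (bar_rhoR br rhoL T).
Proof.
move=> [[brL brR] leib] [[rLl rLr] [rRl rRr] rL rR r3] [linT RB].
have brB1 : forall x a b, br x (a - b) = br x a - br x b := fun x => linB (brL x).
have brB2 : forall y a b, br (a - b) y = br a y - br b y := fun y => linB (brR y).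
have brD2 : forall y a b, br (a + b) y = br a y + br b y := fun y => linD (brR y).
have TD := linD linT. have TB := linB linT. have T0 := lin0 linT.
have rLD1 : forall x a b, rhoL x (a + b) = rhoL x a + rhoL x b := fun x => linD (rLl x).
have rLD2 : forall w a b, rhoL (a + b) w = rhoL a w + rhoL b w := fun w => linD (rLr w).
have rLB2 : forall w a b, rhoL (a - b) w = rhoL a w - rhoL b w := fun w => linB (rLr w).
have rRD1 : forall x a b, rhoR x (a + b) = rhoR x a + rhoR x b := fun x => linD (rRl x).
have rRB2 : forall w a b, rhoR (a - b) w = rhoR a w - rhoR b w := fun w => linB (rRr w).
have RBT : forall v w, T (rhoL (T v) w + rhoR (T w) v) = br (T v) (T w) by move=> *; rewrite RB.
have AL : forall u v x, bar_rhoL br rhoR T u (bar_rhoL br rhoR T v x) =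
   br (T u) (br (T v) x) - T (rhoL (T u) (rhoR x v)) - T (rhoR (br (T v) x) u).
  move=> u v x; rewrite /bar_rhoL brB1 rRB2 [br (T u) (T _)]RB TD TB.
  by rewrite G1.
have BL : forall u v x, bar_rhoL br rhoR T u (bar_rhoR br rhoL T v x) =
   br (T u) (br x (T v)) - T (rhoL (T u) (rhoL x v)) - T (rhoR (br x (T v)) u).
  move=> u v x; rewrite /bar_rhoL /bar_rhoR brB1 rRB2 [br (T u) (T _)]RB TD TB.
  by rewrite G1.
have BR : forall u v x, bar_rhoR br rhoL T v (bar_rhoL br rhoR T u x) =
   br (br (T u) x) (T v) - T (rhoR (T v) (rhoR x u)) - T (rhoL (br (T u) x) v).
  move=> u v x; rewrite /bar_rhoL /bar_rhoR brB2 rLB2 [br (T _) (T v)]RB TD TB.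
  by rewrite G2.
split.
- split=> [u|x].
    exact: (lin_sub (f := fun y => br (T u) y) (g := fun y => T (rhoR y u))
             (brL _) (lin_comp linT (rRr u))).
  exact: (lin_sub (f := fun y => br (T y) x) (g := fun y => T (rhoR x y))
             (lin_comp (brR x) linT) (lin_comp linT (rRl x))).
- split=> [u|x].
    exact: (lin_sub (f := fun y => br y (T u)) (g := fun y => T (rhoL y u))
             (brR _) (lin_comp linT (rLr u))).
  exact: (lin_sub (f := fun y => br x (T y)) (g := fun y => T (rhoL x y))
             (lin_comp (brL x) linT) (lin_comp linT (rLl x))).
- move=> u v x; rewrite AL AL (leib (T u) (T v) x).
  rewrite {1}/bar_rhoL /bracket_T RBT.
  have K1 : rhoR x (rhoL (T u) v + rhoR (T v) u) =
    (rhoL (T u) (rhoR x v) + rhoR (br (T v) x) u) -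
    (rhoL (T v) (rhoR x u) + rhoR (br (T u) x) v).
    by rewrite rRD1 (rR (T v) x) (rR (T u) x) (r3 (T v) x u); apply: Z2.
  by rewrite K1 TB !TD; apply: Z1.
- move=> u v x; rewrite BL BR (leib (T u) x (T v)).
  rewrite {1}/bar_rhoR /bracket_T RBT.
  have K2 : rhoL x (rhoL (T u) v + rhoR (T v) u) =
    (rhoL (T u) (rhoL x v) + rhoR (br x (T v)) u) -
    (rhoR (T v) (rhoR x u) + rhoL (br (T u) x) v).
    by rewrite rLD1 (rL (T u) x) (rR x (T v)) (r3 x (T v) u); apply: Z3.
  by rewrite K2 TB !TD; apply: Z1'.
- move=> u v x; apply/eqP; rewrite -addr_eq0.
  rewrite -(linD (lin_sub (f := fun y => br y (T v)) (g := fun y => T (rhoL y v))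
             (brR _) (lin_comp linT (rLr v)))) /=.
  have -> : bar_rhoL br rhoR T u x + bar_rhoR br rhoL T u x =
     (br (T u) x + br x (T u)) - T (rhoR x u + rhoL x u).
    rewrite /bar_rhoL /bar_rhoR TD opprD !addrA.
    by rewrite [LHS](ACl (1*3*2*4)%AC).
  rewrite brB2 rLB2.
  have S0 : forall a b c, br (br a b + br b a) c = 0.
    move=> a b c.
    have e1 : br (br a b) c = br a (br b c) - br b (br a c) by rewrite (leib a b c) addrK.
    have e2 : br (br b a) c = br b (br a c) - br a (br b c) by rewrite (leib b a c) addrK.
    by rewrite brD2 e1 e2 -(opprB (br a (br b c))) addrN.
  have S1 : forall a b w, rhoL (br a b + br b a) w = 0.
    by move=> a b w; rewrite rLD2 rL rL -(opprB (rhoL a (rhoL b w))) addrN.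
  by rewrite S0 S1 !sub0r (linN linT) opprK RB TD rRD1 (r3 x (T v) u) addrN T0 addr0 addNr.
Qed.
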